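(* Let $\theta>1$, $r\in(\theta^{-1},\theta^{-1/2}]$ and $s=\max\big(1,\frac{\ln\theta}{\ln(r\theta)}-2\big)$. Let $(P_1,\dots,P_n)$ be a random price sequence with values in $[1,\theta]$, $P^*=\max_iP_i$, and let $Y$ be a random prediction with values in $[1,\theta]$, with arbitrary joint distribution. Then \[ \frac{\mathbb{E}[\mathsf{A}^1_r(P,Y)]}{\mathbb{E}[P^*]}\ \ge\ \max\Big\{r,\ \frac{1}{r\theta}\,\frac{\mathbb{E}[P^*\,\mathcal{E}(P^*,Y)^{s}]}{\mathbb{E}[P^*]}\Big\}. \]
   Context: One-max search: fix $\theta>1$. Prices $p_1,\dots,p_n\in[1,\theta]$ are revealed one at a time; the algorithm receives at the start a prediction $y\in[1,\theta]$ of the maximum price. At each step it irrevocably accepts the current price (payoff = that price) or rejects it; if nothing is accepted the payoff is $1$. Let $\varphi_r(z)=\frac{r\theta-1}{1-r}+\frac{1-r^2\theta}{1-r}\cdot\frac{z}{r\theta}$ and $\Phi^1_r(z)=\max(r\theta,\varphi_r(z))$; $\mathsf{A}^1_r$ accepts the first price $p_i\ge\Phi^1_r(y)$, and $\mathsf{A}^1_r(P,Y)$ denotes its (random) payoff run on the realized prices and prediction. $\mathcal{E}(a,b)=\min\{a/b,b/a\}$. *)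

(* Defs.v *)
From HB Require Import structures.
From mathcomp Require Import all_boot all_order all_algebra.
From mathcomp Require Import all_classical all_reals all_analysis.
Set Implicit Arguments. Unset Strict Implicit. Unset Printing Implicit Defensive.
Import Order.TTheory GRing.Theory Num.Theory.
Local Open Scope ring_scope.

Section OneMax.
Variable R : realType.

Definition phi_r (theta r z : R) : R :=
  (r * theta - 1) / (1 - r) + (1 - r ^+ 2 * theta) / (1 - r) * (z / (r * theta)).

Definition Phi1 (theta r z : R) : R := Num.max (r * theta) (phi_r theta r z).

Definition threshold_payoff (thr : R) (s : seq R) : R :=
  foldr (fun x acc => if thr <= x then x else acc) 1 s.

Definition A1 (theta r : R) (n : nat) (p : 'I_n -> R) (y : R) : R :=
  threshold_payoff (Phi1 theta r y) [seq p i | i <- enum 'I_n].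

Definition Equal (a b : R) : R := Num.min (a / b) (b / a).

(* maximum of the prices (n >= 1 and prices >= 1 in the statement, so the
   neutral element 1 does not affect the value) *)
Definition pmax (n : nat) (p : 'I_n -> R) : R := \big[Num.max/1]_(i < n) p i.

End OneMax.

(* Main.v *)
Require Import Defs.
From HB Require Import structures.
From mathcomp Require Import all_boot all_order all_algebra.
From mathcomp Require Import all_classical all_reals all_analysis.
From mathcomp Require Import ring lra measurable_realfun.
Import Order.TTheory GRing.Theory Num.Theory.
Local Open Scope ring_scope.

Section Real.
Variable R : realType.

Lemma expR_tan (z w : R) : expR w * (1 + z - w) <= expR z.
Proof.
have -> : expR z = expR w * expR (z - w) by rewrite -expRD addrC subrK.
rewrite ler_pM2l ?expR_gt0 //.
have := expR_ge1Dx (z - w); by rewrite addrA.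
Qed.

Lemma bern (al L : R) : 0 <= al <= 1 ->
  expR (al * L) <= al * expR L + (1 - al).
Proof.
case/andP=> a0 a1.
have h1 := expR_tan L (al * L).
have h2 := expR_tan 0 (al * L).
rewrite expR0 in h2.
have e0 := expR_gt0 (al * L).
have : expR (al * L) * (al * (1 + L - al * L) + (1 - al) * (1 + 0 - al * L))
   <= al * expR L + (1 - al).
  rewrite mulrDr !mulrA.
  apply: lerD.
    by rewrite [_ * al]mulrC -mulrA; apply: ler_wpM2l.
  rewrite [_ * (1 - al)]mulrC -mulrA -[X in _ <= X]mulr1.
  by apply: ler_wpM2l; rewrite ?subr_ge0.
have -> : al * (1 + L - al * L) + (1 - al) * (1 + 0 - al * L) = 1 by ring.
by rewrite mulr1.
Qed.

Lemma phi_interp (theta r y : R) : 0 < r < 1 -> 0 < theta ->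
  (theta - r * theta) * phi_r theta r y =
  (theta - y) * (r * theta) + (y - r * theta) / r.
Proof.
case/andP=> r0 r1 t0; rewrite /phi_r.
have h1 : 1 - r != 0 by rewrite subr_eq0 eq_sym lt_eqF.
have h2 : r != 0 by rewrite gt_eqF.
have h3 : theta != 0 by rewrite gt_eqF.
by field; rewrite ?h1 ?h2 ?h3 ?mulf_neq0.
Qed.

Lemma key (theta r s y p : R) : 1 < theta -> theta^-1 < r -> r < 1 -> 1 <= s ->
  ln theta <= (s + 2) * ln (r * theta) -> r * theta <= y <= theta ->
  0 < p -> p <= phi_r theta r y ->
  p * expR (s * (ln p - ln y)) <= r * theta.
Proof.
move=> t1 rt r1 s1 hs /andP[ay yt] p0 pphi.
have t0 : 0 < theta by lra.
have r0 : 0 < r by apply: lt_trans rt; rewrite invr_gt0.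
have a1 : 1 < r * theta by rewrite -ltr_pdivrMr // div1r.
set a := r * theta in ay a1 hs pphi *.
have y0 : 0 < y by lra.
have at_ : a < theta by rewrite /a -[X in _ < X]mul1r ltr_pM2r.
set La := ln a; set Lt := ln theta; set Ly := ln y.
have hLa : La = ln r + Lt by rewrite /La /a lnM.
set al := s / (s + 1).
have s10 : 0 < s + 1 by lra.
have al0 : 0 <= al by rewrite /al divr_ge0 //; lra.
have al1 : al <= 1 by rewrite /al ler_pdivrMr //; lra.
have ala : 1 - al = (s + 1)^-1.
  by rewrite /al; field; rewrite gt_eqF.
have eA : expR (La - Ly) = a / y.
  by rewrite expRD expRN /La /Ly !lnK // posrE; lra.
have eT : expR (Lt - Ly) = theta / y.
  by rewrite expRD expRN /Lt /Ly !lnK // posrE; lra.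
have bA := bern al (La - Ly) (introT andP (conj al0 al1)).
have bT := bern al (Lt - Ly) (introT andP (conj al0 al1)).
rewrite eA in bA; rewrite eT in bT.
set Ea := expR (al * La); set Et := expR (al * Lt); set Ey := expR (al * Ly).
have Ey0 : 0 < Ey by apply: expR_gt0.
have dA : expR (al * (La - Ly)) = Ea / Ey by rewrite mulrBr expRD expRN.
have dT : expR (al * (Lt - Ly)) = Et / Ey by rewrite mulrBr expRD expRN.
rewrite dA in bA; rewrite dT in bT.
have bA' : Ea <= Ey * (al * (a / y) + (1 - al)).
  by rewrite -ler_pdivrMl // mulrC.
have bT' : Et <= Ey * (al * (theta / y) + (1 - al)).
  by rewrite -ler_pdivrMl // mulrC.
have idt : (theta - y) * (al * (a / y) + (1 - al)) + (y - a) * (al * (theta / y) + (1 - al))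
   = theta - a by field; rewrite gt_eqF.
have comb : (theta - y) * Ea + (y - a) * Et <= Ey * (theta - a).
  rewrite -idt mulrDr.
  apply: lerD.
    by rewrite mulrCA; apply: ler_wpM2l => //; lra.
  by rewrite mulrCA; apply: ler_wpM2l => //; lra.
set K := expR ((1 - al) * La).
have K0 : 0 < K by apply: expR_gt0.
have KEa : K * Ea = a by rewrite -expRD -mulrDl subrK mul1r /La lnK // posrE; lra.
have cge : r^-1 <= K * Et.
  rewrite -expRD -[r^-1]lnK ?posrE ?invr_gt0 // ler_expR lnV ?posrE //.
  have -> : ln r = La - Lt by rewrite hLa; ring.
  have : 0 <= (s + 2) * La - Lt by rewrite subr_ge0; exact: hs.
  have e : (1 - al) * La + al * Lt - - (La - Lt) = ((s + 2) * La - Lt) / (s + 1).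
    by rewrite /al; field; rewrite gt_eqF.
  by move=> h; rewrite -subr_ge0 e divr_ge0 // ltW.
have c2 : (theta - a) * phi_r theta r y <= K * Ey * (theta - a).
  rewrite phi_interp ?r0 ?r1 // -/a -mulrA.
  apply: le_trans _ (ler_wpM2l (ltW K0) comb).
  rewrite mulrDr [K * (_ * Ea)]mulrCA KEa [K * (_ * Et)]mulrCA.
  by apply: lerD => //; apply: ler_wpM2l => //; lra.
have phiM : phi_r theta r y <= K * Ey.
  by rewrite -(ler_pM2r (_ : 0 < theta - a)) 1?mulrC //; lra.
have KEy : K * Ey = expR ((1 - al) * La + al * Ly) by rewrite expRD.
rewrite KEy in phiM.
have lp : ln p <= (1 - al) * La + al * Ly.
  by rewrite -ler_expR lnK ?posrE //; apply: le_trans pphi phiM.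
have -> : a = expR ((s + 1) * ((1 - al) * La + al * Ly) - s * Ly).
  rewrite ala /al.
  have -> : (s + 1) * ((s + 1)^-1 * La + s / (s + 1) * Ly) - s * Ly = La
    by field; rewrite gt_eqF.
  by rewrite /La lnK // posrE; lra.
rewrite -[X in X * _]lnK ?posrE // -expRD ler_expR.
have -> : ln p + s * (ln p - Ly) = (s + 1) * ln p - s * Ly by ring.
by rewrite lerD2r ler_pM2l.
Qed.


Lemma bigmax_ge (I : eqType) (s : seq I) (F : I -> R) i :
  i \in s -> F i <= \big[Num.max/1]_(j <- s) F j.
Proof.
elim: s => // a s IH; rewrite inE big_cons => /orP[/eqP->|h].
  by rewrite le_max lexx.
by rewrite le_max (IH h) orbT.
Qed.

Lemma bigmax_in (I : eqType) (s : seq I) (F : I -> R) :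
  \big[Num.max/1]_(j <- s) F j = 1 \/
  exists2 j, j \in s & \big[Num.max/1]_(j <- s) F j = F j.
Proof.
elim: s => [|a s IH]; first by left; rewrite big_nil.
rewrite big_cons.
have [h|h] := leP (F a) (\big[Num.max/1]_(j <- s) F j).
  case: IH => [->|[j js ->]]; first by left.
  by right; exists j; rewrite // inE js orbT.
by right; exists a; rewrite ?inE ?eqxx.
Qed.

Lemma tp_cases (thr : R) (s : seq R) :
  (threshold_payoff thr s = 1 /\ forall x, x \in s -> x < thr) \/
  (thr <= threshold_payoff thr s /\ threshold_payoff thr s \in s).
Proof.
rewrite /threshold_payoff; elim: s => [|a s IH] /=; first by left.
case: ifPn => ha.
  by right; rewrite ha inE eqxx.
case: IH => [[-> h]|[h1 h2]].
  left; split => // x; rewrite inE => /orP[/eqP->|/h//].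
  by rewrite ltNge.
by right; rewrite h1 inE h2 orbT.
Qed.


Lemma pointwise (theta r s y pm : R) (ps : seq R) :
  1 < theta -> theta^-1 < r -> r * r * theta <= 1 -> 1 <= s ->
  ln theta <= (s + 2) * ln (r * theta) ->
  1 <= y <= theta -> 1 <= pm <= theta -> pm \in ps ->
  (forall x, x \in ps -> x <= pm) ->
  r * pm <= threshold_payoff (Phi1 theta r y) ps /\
  pm * (Equal pm y) `^ s <= r * theta * threshold_payoff (Phi1 theta r y) ps.
Proof.
move=> t1 rt rrt s1 hs /andP[y1 yt] /andP[pm1 pmt] pmin pmax.
have t0 : 0 < theta by lra.
have r0 : 0 < r by apply: lt_trans rt; rewrite invr_gt0.
have r1 : r < 1.
  rewrite ltNge; apply/negP => h; have h2 : 1 <= r * r by rewrite mulr_ege1.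
  have : 0 <= (r * r - 1) * theta by rewrite mulr_ge0 //; lra.
  lra.
have a1 : 1 < r * theta by rewrite -ltr_pdivrMr // div1r.
have at_ : r * theta < theta by rewrite -[X in _ < X]mul1r ltr_pM2r.
have I := phi_interp theta r y (introT andP (conj r0 r1)) t0.
set a := r * theta in a1 at_ I hs *.
set f := phi_r theta r y in I *.
set ri := r^-1.
have rri : r * ri = 1 by rewrite /ri mulfV ?gt_eqF.
have ari : a <= ri by rewrite -(ler_pM2l r0) rri /a mulrA.
have rit : ri <= theta by rewrite /ri -(ler_pM2l r0) mulfV ?gt_eqF // ltW.
have ta0 : 0 < theta - a by lra.
have E1 : (theta - a) * (ri - f) = (theta - y) * (ri - a).
  by rewrite mulrBr I /ri /a; field; rewrite gt_eqF.
have E2 : a * ((theta - a) * f) - (theta - a) * y = a * ((theta - y) * (a - 1)).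
  by rewrite I /ri /a; field; rewrite gt_eqF.
have E3 : (theta - a) * (f - a) = (y - a) * (ri - a).
  by rewrite mulrBr I /ri /a; field; rewrite gt_eqF.
have E4 : (theta - a) * (y - f) = (y - a) * (theta - ri).
  by rewrite mulrBr I /ri /a; field; rewrite gt_eqF.
have F1 : f <= ri.
  by rewrite -subr_ge0 -(pmulr_rge0 _ ta0) E1 mulr_ge0 //; lra.
have F2 : y <= a * f.
  have : 0 <= a * ((theta - y) * (a - 1)) by rewrite !mulr_ge0 //; lra.
  rewrite -E2 subr_ge0 mulrCA (ler_pM2l ta0) //.
have F3 : a < f -> a < y.
  move=> af; have : 0 < (theta - a) * (f - a) by rewrite mulr_gt0 //; lra.
  rewrite E3; apply: contraTT; rewrite -!leNgt => ya.
  by apply: mulr_le0_ge0; lra.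
have F4 : a <= y -> f <= y.
  move=> ay; rewrite -subr_ge0 -(pmulr_rge0 _ ta0) E4 mulr_ge0 //; lra.
set Phi := Phi1 theta r y.
have Pa : a <= Phi by rewrite /Phi /Phi1 le_max lexx.
have Pri : Phi <= ri by rewrite /Phi /Phi1 ge_max ari F1.
have Py : y <= a * Phi.
  by apply: le_trans F2 _; rewrite ler_pM2l ?(lt_trans ltr01 a1) // /Phi /Phi1 le_max lexx orbT.
have y0 : 0 < y by lra.
have pm0 : 0 < pm by lra.
set E := Equal pm y.
have E0 : 0 < E by rewrite /E /Equal lt_min !divr_gt0.
have Ey : E <= y / pm by rewrite /E /Equal ge_min lexx orbT.
have E1' : E <= 1.
  have [h|h] := leP pm y.
    by rewrite /E /Equal ge_min ler_pdivrMr // mul1r h.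
  by rewrite /E /Equal ge_min [X in _ || X]ler_pdivrMr // mul1r (ltW h) orbT.
have Es : E `^ s <= E by apply: ge1r_powR => //; rewrite E0.
have Es1 : E `^ s <= 1 by apply: le_trans Es E1'.
have pmE : pm * E <= y.
  by apply: le_trans (ler_wpM2l (ltW pm0) Ey) _; rewrite mulrCA divff ?gt_eqF ?mulr1.
have pmEs : pm * E `^ s <= pm * E by apply: ler_wpM2l => //; lra.
case: (tp_cases Phi ps) => [[-> hlt]|[hA _]].
  have pmP := hlt _ pmin.
  split.
    by apply: le_trans (ler_wpM2l (ltW r0) (ltW (lt_le_trans pmP Pri))) _; rewrite rri.
  rewrite mulr1.
  have [pa|ap] := leP pm a.
    by apply: le_trans pa; rewrite -[X in _ <= X]mulr1 ler_wpM2l // ltW.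
  have af : a < f.
    rewrite ltNge; apply/negP => fa.
    have : Phi = a by rewrite /Phi /Phi1 max_l.
    move=> PA; rewrite PA in pmP; lra.
  have Pf : Phi = f by rewrite /Phi /Phi1 max_r // ltW.
  have ay := F3 af.
  have fy := F4 (ltW ay).
  rewrite Pf in pmP.
  have EE : E = pm / y.
    rewrite /E /Equal min_l //; apply: (@le_trans _ _ 1).
      by rewrite ler_pdivrMr // mul1r; lra.
    by rewrite ler_pdivlMr // mul1r; lra.
  rewrite EE /powR gt_eqF ?divr_gt0 // ln_div ?posrE //.
  apply: key => //; first by rewrite (ltW ay) yt. exact: ltW.
split.
  apply: le_trans hA; apply: le_trans Pa; rewrite /a ler_wpM2l //; lra.
apply: le_trans pmEs _; apply: le_trans pmE _; apply: le_trans Py _.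
by rewrite ler_wpM2l //; lra.
Qed.

End Real.

Section Integ.
Variables (R : realType) (d : measure_display) (T : measurableType d)
  (Pr : probability T R).

Lemma int_bnd (f : T -> R) M : measurable_fun setT f ->
  (forall w, 0 <= f w <= M) ->
  exists c, (\int[Pr]_w (f w)%:E = c%:E)%E /\ 0 <= c <= M.
Proof.
move=> mf fb.
have h0 : (0 <= \int[Pr]_w (f w)%:E)%E.
  by apply: integral_ge0 => w _; rewrite lee_fin; case/andP: (fb w).
have hM : (\int[Pr]_w (f w)%:E <= M%:E)%E.
  have hc : (\int[Pr]_w (M%:E) = M%:E)%E by have := expectation_cst Pr M; rewrite unlock.
  rewrite -[X in (_ <= X)%E]hc.
    apply: ge0_le_integral => //.
    - by move=> w _; rewrite lee_fin; case/andP: (fb w).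
    - exact/measurable_EFinP.
    - by move=> w _; rewrite lee_fin; case/andP: (fb w).
have hfin : (\int[Pr]_w (f w)%:E)%E \is a fin_num.
  by rewrite ge0_fin_numE //; apply: le_lt_trans hM _; rewrite ltey.
exists (fine (\int[Pr]_w (f w)%:E)%E); split; first by rewrite fineK.
by rewrite -!lee_fin fineK // h0 hM.
Qed.

Lemma int_le (f g : T -> R) : measurable_fun setT f -> measurable_fun setT g ->
  (forall w, 0 <= f w) -> (forall w, f w <= g w) ->
  (\int[Pr]_w (f w)%:E <= \int[Pr]_w (g w)%:E)%E.
Proof.
move=> mf mg f0 fg; apply: ge0_le_integral => //.
- by move=> w _; rewrite lee_fin.
- exact/measurable_EFinP.
- exact/measurable_EFinP.
- by move=> w _; rewrite lee_fin.
Qed.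

Lemma int_scale (f : T -> R) k : measurable_fun setT f -> (forall w, 0 <= f w) ->
  0 <= k ->
  (\int[Pr]_w (k * f w)%:E = k%:E * \int[Pr]_w (f w)%:E)%E.
Proof.
move=> mf f0 k0; rewrite -ge0_integralZl_EFin //.
- by move=> w _; rewrite lee_fin.
- exact/measurable_EFinP.
Qed.


Lemma meas_bigmax n (P : 'I_n -> T -> R) (s : seq 'I_n) :
  (forall i, measurable_fun setT (P i)) ->
  measurable_fun setT (fun w => \big[Num.max/1]_(i <- s) P i w).
Proof.
move=> mP; elim: s => [|a s IH].
  under eq_fun do rewrite big_nil; exact: measurable_cst.
under eq_fun do rewrite big_cons.
exact: measurable_maxr.
Qed.

Lemma meas_tp n (P : 'I_n -> T -> R) (thr : T -> R) (s : seq 'I_n) :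
  (forall i, measurable_fun setT (P i)) -> measurable_fun setT thr ->
  measurable_fun setT (fun w => threshold_payoff (thr w) [seq P i w | i <- s]).
Proof.
move=> mP mt; elim: s => [|a s IH].
  exact: measurable_cst.
rewrite /threshold_payoff /=.
apply: measurable_fun_ifT => //.
exact: measurable_fun_ler.
Qed.

Lemma meas_Phi (theta r : R) (Y : T -> R) : measurable_fun setT Y ->
  measurable_fun setT (fun w => Phi1 theta r (Y w)).
Proof.
move=> mY; rewrite /Phi1 /phi_r.
apply: measurable_maxr; first exact: measurable_cst.
apply: measurable_funD; first exact: measurable_cst.
apply: measurable_funM; first exact: measurable_cst.
apply: measurable_funM => //; exact: measurable_cst.
Qed.

Lemma meas_G (X Y : T -> R) (s : R) : measurable_fun setT X -> measurable_fun setT Y ->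
  (forall w, 0 < X w) -> (forall w, 0 < Y w) ->
  measurable_fun setT (fun w => X w * (Equal (X w) (Y w)) `^ s).
Proof.
move=> mX mY X0 Y0; apply: measurable_funM => //.
apply: (measurableT_comp (measurable_powR s)).
have -> : (fun w => Equal (X w) (Y w)) =
  (fun w => Num.min (X w * (Y w) `^ (-1)) (Y w * (X w) `^ (-1))).
  by apply/funext => w; rewrite /Equal !powR_inv1 // ltW.
apply: measurable_minr; apply: measurable_funM => //;
  exact: (measurableT_comp (measurable_powR (-1))).
Qed.

End Integ.

Theorem lemma1 (R : realType) (d : measure_display) (T : measurableType d)
  (Pr : probability T R) (theta r : R) (n : nat)
  (P : 'I_n -> T -> R) (Y : T -> R) :
  1 < theta ->
  theta^-1 < r -> r <= theta `^ (- 2^-1) ->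
  (0 < n)%N ->
  (forall i, measurable_fun setT (P i)) ->
  measurable_fun setT Y ->
  (forall i w, 1 <= P i w <= theta) ->
  (forall w, 1 <= Y w <= theta) ->
  let s := Num.max 1 (ln theta / ln (r * theta) - 2) in
  let Pstar := fun w => pmax (fun i => P i w) in
  let EPstar := fine ('E_Pr[Pstar])%E in
  fine ('E_Pr[fun w => (A1 theta r (fun i => P i w) (Y w))%R])%E / EPstar >=
  Num.max r ((r * theta)^-1 *
     (fine ('E_Pr[fun w => (Pstar w * (Equal (Pstar w) (Y w)) `^ s)%R])%E / EPstar)).
Proof.
move=> t1 rt rsq n0 mP mY hP hY; cbv zeta.
set s := Num.max 1 _.
set Pstar := (fun w => pmax _).
set EPstar := fine ('E_Pr[Pstar])%E.
have t0 : 0 < theta by apply: lt_trans t1.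
have r0 : 0 < r by apply: lt_trans rt; rewrite invr_gt0.
have rrt : r * r * theta <= 1.
  have h : r * r <= theta `^ (- 2^-1) * theta `^ (- 2^-1).
    by apply: ler_pM => //; apply: ltW.
  rewrite -powRD in h; last by apply/implyP => _; rewrite gt_eqF.
  have e : - 2^-1 + - 2^-1 = - 1 :> R by field.
  rewrite e powR_inv1 in h; last exact: ltW.
  by have := ler_wpM2r (ltW t0) h; rewrite mulVf ?gt_eqF.
have s1 : 1 <= s by rewrite /s le_max lexx.
have L0 : 0 < ln (r * theta).
  by apply: ln_gt0; rewrite -ltr_pdivrMr // div1r.
have hs : ln theta <= (s + 2) * ln (r * theta).
  rewrite -ler_pdivrMr //.
  have : ln theta / ln (r * theta) - 2 <= s by rewrite /s le_max lexx orbT.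
  by move=> h; lra.
pose ps w := [seq P i w | i <- enum 'I_n].
have psb w x : x \in ps w -> 1 <= x <= theta.
  by case/mapP => i _ ->.
have PSin w : Pstar w \in ps w /\ forall x, x \in ps w -> x <= Pstar w.
  split; last first.
    by move=> x /mapP[i _ ->]; apply: bigmax_ge; exact: mem_index_enum.
  rewrite /Pstar /pmax.
  case: (@bigmax_in R _ (index_enum 'I_n) (fun i => P i w)) => [e|[j _ ->]]; last first.
    by apply: map_f; rewrite mem_enum.
  pose i0 : 'I_n := Ordinal n0.
  have h1 : P i0 w <= \big[Num.max/1]_(j <- index_enum 'I_n) P j w.
    by apply: bigmax_ge; exact: mem_index_enum.
  have h2 := hP i0 w.
  have -> : \big[Num.max/1]_(j <- index_enum 'I_n) P j w = P i0 w.
    rewrite e in h1 *; apply/eqP; rewrite eq_le h1 andbT; by case/andP: h2.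
  by apply: map_f; rewrite mem_enum.
have Pb w : 1 <= Pstar w <= theta by exact: (psb w _ (proj1 (PSin w))).
pose A w := A1 theta r (fun i => P i w) (Y w).
have PW (w : T) := @pointwise R _ _ _ _ _ _ t1 rt rrt s1 hs (hY w) (Pb w) (proj1 (PSin w)) (proj2 (PSin w)).
have Ab w : 1 <= A w <= theta.
  rewrite /A /A1; case: (@tp_cases R (Phi1 theta r (Y w)) [seq P i w | i <- enum 'I_n]).
    by move=> [-> _]; rewrite lexx ltW.
  by move=> [_ /psb].
pose G w := Pstar w * (Equal (Pstar w) (Y w)) `^ s.
have G0 w : 0 <= G w by rewrite mulr_ge0 ?powR_ge0 //; case/andP: (Pb w) => h _; lra.
have mPs : measurable_fun setT Pstar by apply: meas_bigmax.
have mA : measurable_fun setT A.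
  by apply: meas_tp => //; apply: meas_Phi.
have mG : measurable_fun setT G.
  apply: meas_G => // w; [case/andP: (Pb w) | case/andP: (hY w)] => h _; lra.
change (Num.max r ((r * theta)^-1 * (fine ('E_Pr[G])%E / EPstar)) <=
  fine ('E_Pr[A])%E / EPstar).
have [cA [eA /andP[cA0 _]]] : exists c, (\int[Pr]_w (A w)%:E = c%:E)%E /\ 0 <= c <= theta.
  by apply: int_bnd => // w; case/andP: (Ab w) => h1 h2; rewrite h2 andbT; lra.
have [cS [eS /andP[cS0 _]]] : exists c, (\int[Pr]_w (Pstar w)%:E = c%:E)%E /\ 0 <= c <= theta.
  by apply: int_bnd => // w; case/andP: (Pb w) => h1 h2; rewrite h2 andbT; lra.
have [cG [eG /andP[cG0 _]]] : exists c, (\int[Pr]_w (G w)%:E = c%:E)%E /\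
    0 <= c <= r * theta * theta.
  apply: int_bnd => // w; rewrite G0 /=.
  apply: le_trans (proj2 (PW w)) _; apply: ler_wpM2l; first by rewrite mulr_ge0 // ltW.
  by case/andP: (Ab w).
rewrite /EPstar.
have -> : ('E_Pr[A] = cA%:E)%E by rewrite unlock.
have -> : ('E_Pr[G] = cG%:E)%E by rewrite unlock.
have -> : ('E_Pr[Pstar] = cS%:E)%E by rewrite unlock.
rewrite /=.
have cS1 : 1 <= cS.
  have hc : (\int[Pr]_w (1%:E) = 1%:E)%E by have := expectation_cst Pr 1; rewrite unlock.
  rewrite -lee_fin -eS -hc; apply: (@int_le R d T Pr (fun _ => 1) Pstar) => //.
  by move=> w; case/andP: (Pb w).
have cSp : 0 < cS by lra.
have P0 w : 0 <= Pstar w by case/andP: (Pb w) => h _; lra.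
have A0 w : 0 <= A w by case/andP: (Ab w) => h _; lra.
have h1 : r * cS <= cA.
  rewrite -lee_fin -eA EFinM -eS -(@int_scale R d T Pr _ _ mPs P0 (ltW r0)).
  apply: int_le => //.
  - by apply: measurable_funM => //; exact: measurable_cst.
  - by move=> w; rewrite mulr_ge0 //; case/andP: (Pb w) => h _; lra.
  - by move=> w; exact: (proj1 (PW w)).
have h2 : cG <= r * theta * cA.
  rewrite -lee_fin -eG EFinM -eA -(@int_scale R d T Pr _ _ mA A0 (ltW (mulr_gt0 r0 t0))).
  apply: int_le => //.
  - by apply: measurable_funM => //; exact: measurable_cst.
  - by move=> w; exact: (proj2 (PW w)).
rewrite ge_max; apply/andP; split.
  by rewrite ler_pdivlMr.
rewrite mulrA ler_pM2r ?invr_gt0 // ler_pdivrMl ?mulr_gt0 //.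
Qed.
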